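(* Let $(A,\leq,\cdot,/)$ be a right-residuated magma satisfying condition (N). Then: (1) for every $x\in A$, $x/x$ is a maximal element of $(A,\leq)$; (2) $((x/x)y)/y = x/x$ for all $x,y\in A$; (3) if $(A,\leq)$ has a top element, then $x/x$ equals this top element for every $x\in A$.
   Context: Write $xy$ for $x\cdot y$; $\cdot$ binds more strongly than $/$, and $/$ binds more strongly than $\sqcap$, where $x\sqcap y := (x/y)y$. A right-residuated magma is a structure $(A,\leq,\cdot,/)$ where $(A,\leq)$ is a poset and $xy\leq z\iff x\leq z/y$ for all $x,y,z\in A$. Condition (N): for all $x,y\in A$, $x\leq y\iff x = y\sqcap x$. *)

(* Defs.v *)
Record RRMagma := {
  carrier :> Type;
  le : carrier -> carrier -> Prop;
  mul : carrier -> carrier -> carrier;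
  rdiv : carrier -> carrier -> carrier;
  le_refl : forall x, le x x;
  le_antisym : forall x y, le x y -> le y x -> x = y;
  le_trans : forall x y z, le x y -> le y z -> le x z;
  residuation : forall x y z, le (mul x y) z <-> le x (rdiv z y)
}.

Definition rmeet (A : RRMagma) (x y : A) : A := mul A (rdiv A x y) y.

Definition condN (A : RRMagma) : Prop :=
  forall x y : A, le A x y <-> x = rmeet A y x.

Definition is_maximal (A : RRMagma) (m : A) : Prop :=
  forall z : A, le A m z -> z = m.

Definition is_top (A : RRMagma) (t : A) : Prop :=
  forall z : A, le A z t.

(* Main.v *)
Require Import Defs.

Lemma max_lem (A : RRMagma) (HN : condN A) (x z : A) :
  le A (rdiv A x x) z -> z = rdiv A x x.
Proof.
  intro Hez.
  assert (Hex : mul A (rdiv A x x) x = x).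
  { symmetry. apply (proj1 (HN x x)). apply le_refl. }
  (* left monotonicity: e x <= z x *)
  assert (Hxz : le A x (mul A z x)).
  { apply le_trans with (mul A (rdiv A x x) x); [rewrite Hex; apply le_refl|].
    apply (proj2 (residuation A _ _ _)).
    eapply le_trans; [exact Hez|]. apply (proj1 (residuation A _ _ _)). apply le_refl. }
  pose proof (proj1 (HN _ _) Hxz) as Heq. unfold rmeet in Heq.
  assert (Hv : le A (rdiv A (mul A z x) x) (rdiv A x x)).
  { apply (proj1 (residuation A _ _ _)). rewrite <- Heq. apply le_refl. }
  assert (Hz : le A z (rdiv A (mul A z x) x)).
  { apply (proj1 (residuation A _ _ _)). apply le_refl. }
  apply le_antisym; [eapply le_trans; eauto | exact Hez].
Qed.

Theorem mainTheorem6 (A : RRMagma) (HN : condN A) :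
  (forall x : A, is_maximal A (rdiv A x x)) /\
  (forall x y : A, rdiv A (mul A (rdiv A x x) y) y = rdiv A x x) /\
  (forall t : A, is_top A t -> forall x : A, rdiv A x x = t).
Proof.
  split; [|split].
  - intros x z. apply max_lem; auto.
  - intros x y. apply max_lem; auto.
    apply (proj1 (residuation A _ _ _)). apply le_refl.
  - intros t Ht x. symmetry. apply max_lem; auto.
Qed.
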